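(* Let $(\mathbf{H},m,\Delta)$ be a self-adjoint poset Hopf monoid. Then its linearization $\mathbf{k}\mathbf{H}$ is commutative and cocommutative.
   Context: $\mathbf{k}$ is a field of characteristic $0$. A (connected) poset species $\mathbf{H}$ assigns to each finite set $I$ a locally finite poset $\mathbf{H}[I]$, $\mathbf{H}[\emptyset]=\{1\}$, and to each bijection an order-preserving bijection, functorially. A poset Hopf monoid $(\mathbf{H},m,\Delta)$ consists of order-preserving maps $m_{S,T}:\mathbf{H}[S]\times\mathbf{H}[T]\to\mathbf{H}[S\sqcup T]$ (natural, associative, unital) and $\Delta_{S,T}:\mathbf{H}[S\sqcup T]\to\mathbf{H}[S]\times\mathbf{H}[T]$ (natural, coassociative, counital), satisfying compatibility: for $I=S_1\sqcup S_2=T_1\sqcup T_2$, $A=S_1\cap T_1$, $B=S_1\cap T_2$, $C=S_2\cap T_1$, $D=S_2\cap T_2$, if $\Delta_{A,B}(x)=(x_A,x_B)$, $\Delta_{C,D}(y)=(y_C,y_D)$ then $\Delta_{T_1,T_2}(m_{S_1,S_2}(x,y))=(m_{A,C}(x_A,y_C),m_{B,D}(x_B,y_D))$. It is self-adjoint if $m_{S,T}$ and $\Delta_{S,T}$ form a Galois connection for all $S,T$ (either $\Delta\dashv m$ or $m\dashv\Delta$). $\mathbf{k}\mathbf{H}$ is the linearization (basis $\mathbf{H}[I]$). A vector space monoid is commutative if $m_{S,T}(x,y)=m_{T,S}(y,x)$; a comonoid is cocommutative if $\Delta_{S,T}=\beta\circ\Delta_{T,S}$ where $\beta$ swaps tensor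 factors. *)

(* Defs.v *)
From HB Require Import structures.
From mathcomp Require Import all_boot all_order all_algebra.
From mathcomp Require Import finmap.
From mathcomp Require Import monalg.

Set Implicit Arguments.
Unset Strict Implicit.
Unset Printing Implicit Defensive.

Import Order.Theory GRing.Theory.
Local Open Scope order_scope.
Local Open Scope fset_scope.

(** Finite sets are modelled as finite sets of natural numbers [{fset nat}].
    The maps [m I S T : H S -> H T -> H I], [Delta I S T : H I -> H S * H T]
    are only required to have the axioms when [I = S ⊔ T] ([decomp I S T]);
    their values on other triples are irrelevant junk.
    [rel I J s : H I -> H J] is the action of the bijection [I -> J] given by
    restricting [s : nat -> nat] to [I] (whenever [valid_bij s I J]). *)

Definition decomp (I S T : {fset nat}) : bool :=
  (S `&` T == fset0) && (S `|` T == I).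

Definition valid_bij (s : nat -> nat) (I J : {fset nat}) : Prop :=
  {in I &, injective s} /\ [fset s x | x in I] = J.

Definition fimg (s : nat -> nat) (I : {fset nat}) : {fset nat} :=
  [fset s x | x in I].

Section PosetHopf.
Context {d : Order.disp_t} (H : {fset nat} -> porderType d).

Definition locally_finite (P : porderType d) : Prop :=
  forall x y : P, exists s : seq P, forall z : P, x <= z -> z <= y -> z \in s.

Definition le_pair (S T : {fset nat}) (p q : H S * H T) : bool :=
  (p.1 <= q.1) && (p.2 <= q.2).

Record poset_species (rel : forall I J : {fset nat}, (nat -> nat) -> H I -> H J)
  : Prop := {
  ps_locfin : forall I, locally_finite (H I);
  ps_empty : exists u : H fset0, forall v : H fset0, v = u;
  ps_id : forall I (x : H I), rel I I id x = x;
  ps_comp : forall I J K s t (x : H I), valid_bij s I J -> valid_bij t J K ->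
          rel J K t (rel I J s x) = rel I K (t \o s) x;
  ps_ext : forall I J s t, valid_bij s I J -> {in I, s =1 t} -> rel I J s =1 rel I J t;
  ps_mono : forall I J s, valid_bij s I J -> {homo rel I J s : x y / x <= y} }.

Record poset_Hopf_monoid
  (rel : forall I J : {fset nat}, (nat -> nat) -> H I -> H J)
  (m : forall I S T : {fset nat}, H S -> H T -> H I)
  (D : forall I S T : {fset nat}, H I -> H S * H T) : Prop := {
  ph_species : poset_species rel;
  ph_m_mono : forall I S T (x x' : H S) (y y' : H T), decomp I S T ->
      x <= x' -> y <= y' -> m I S T x y <= m I S T x' y';
  ph_D_mono : forall I S T (z z' : H I), decomp I S T -> z <= z' ->
      le_pair (D I S T z) (D I S T z');
  ph_m_nat : forall I J S T s (x : H S) (y : H T), decomp I S T -> valid_bij s I J ->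
      rel I J s (m I S T x y)
      = m J (fimg s S) (fimg s T) (rel S (fimg s S) s x) (rel T (fimg s T) s y);
  ph_D_nat : forall I J S T s (z : H I), decomp I S T -> valid_bij s I J ->
      D J (fimg s S) (fimg s T) (rel I J s z)
      = (rel S (fimg s S) s (D I S T z).1, rel T (fimg s T) s (D I S T z).2);
  ph_assoc : forall I S T U (x : H S) (y : H T) (z : H U),
      decomp (S `|` T) S T -> decomp I (S `|` T) U -> decomp (T `|` U) T U ->
      decomp I S (T `|` U) ->
      m I (S `|` T) U (m (S `|` T) S T x y) z
      = m I S (T `|` U) x (m (T `|` U) T U y z);
  ph_unit : forall I (x : H I) (u : H fset0), m I I fset0 x u = x /\ m I fset0 I u x = x;
  ph_coassoc : forall I S T U (z : H I),
      decomp (S `|` T) S T -> decomp I (S `|` T) U -> decomp (T `|` U) T U ->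
      decomp I S (T `|` U) ->
      let a := D I (S `|` T) U z in
      let a1 := D (S `|` T) S T a.1 in
      let b := D I S (T `|` U) z in
      let b2 := D (T `|` U) T U b.2 in
      [/\ a1.1 = b.1, a1.2 = b2.1 & a.2 = b2.2];
  ph_counit : forall I (z : H I), (D I I fset0 z).1 = z /\ (D I fset0 I z).2 = z;
  ph_compat : forall I S1 S2 T1 T2 (x : H S1) (y : H S2),
      decomp I S1 S2 -> decomp I T1 T2 ->
      let A := S1 `&` T1 in let B := S1 `&` T2 in
      let C := S2 `&` T1 in let E := S2 `&` T2 in
      D I T1 T2 (m I S1 S2 x y)
      = (m T1 A C (D S1 A B x).1 (D S2 C E y).1,
         m T2 B E (D S1 A B x).2 (D S2 C E y).2) }.

Definition galois_conn {P Q : Type} (leP : rel P) (leQ : rel Q)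
  (f : P -> Q) (g : Q -> P) : Prop :=
  forall p q, leQ (f p) q = leP p (g q).

Definition self_adjoint
  (m : forall I S T : {fset nat}, H S -> H T -> H I)
  (D : forall I S T : {fset nat}, H I -> H S * H T) : Prop :=
  (forall I S T, decomp I S T ->
     galois_conn (@Order.le _ (H I)) (@le_pair S T)
       (D I S T) (fun p => m I S T p.1 p.2))
  \/
  (forall I S T, decomp I S T ->
     galois_conn (@le_pair S T) (@Order.le _ (H I))
       (fun p => m I S T p.1 p.2) (D I S T)).

(** Linearization kH: kH[I] is the free k-vector space {malg k[H I]} on H[I];
    kH[S] (x) kH[T] is identified with the free space on H S * H T. *)
Variable k : fieldType.

Definition lin_mul (m : forall I S T : {fset nat}, H S -> H T -> H I)
  (I S T : {fset nat}) (f : {malg k[H S]}) (g : {malg k[H T]}) : {malg k[H I]} :=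
  (\sum_(a <- msupp f) \sum_(b <- msupp g) << f@_a * g@_b *g m I S T a b >>)%R.

Definition lin_comul (D : forall I S T : {fset nat}, H I -> H S * H T)
  (I S T : {fset nat}) (f : {malg k[H I]}) : {malg k[(H S * H T)%type]} :=
  (\sum_(a <- msupp f) << f@_a *g D I S T a >>)%R.

Definition lin_swap (S T : {fset nat}) (g : {malg k[(H T * H S)%type]})
  : {malg k[(H S * H T)%type]} :=
  (\sum_(p <- msupp g) << g@_p *g (p.2, p.1) >>)%R.

Definition lin_commutative (m : forall I S T : {fset nat}, H S -> H T -> H I) : Prop :=
  forall I S T (f : {malg k[H S]}) (g : {malg k[H T]}), decomp I S T ->
    lin_mul m I f g = lin_mul m I g f.

Definition lin_cocommutative (D : forall I S T : {fset nat}, H I -> H S * H T) : Prop :=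
  forall I S T (f : {malg k[H I]}), decomp I S T ->
    lin_comul D S T f = lin_swap (lin_comul D T S f).

End PosetHopf.

(* Main.v *)
Require Import Defs.
From HB Require Import structures.
From mathcomp Require Import all_boot all_order all_algebra.
From mathcomp Require Import finmap.
From mathcomp Require Import monalg.
Import GRing.Theory.

Unset Printing Implicit Defensive.

Section Aux.
Import Order.Theory.
Local Open Scope order_scope.
Local Open Scope fset_scope.
Context {d : Order.disp_t} (H : {fset nat} -> porderType d)
  (rel : forall I J : {fset nat}, (nat -> nat) -> H I -> H J)
  (m : forall I S T : {fset nat}, H S -> H T -> H I)
  (D : forall I S T : {fset nat}, H I -> H S * H T).
Hypothesis hopf : poset_Hopf_monoid rel m D.

Lemma decompC I S T : decomp I S T -> decomp I T S.
Proof. by rewrite /decomp fsetIC fsetUC. Qed.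

Lemma DmST I S T (x : H S) (y : H T) : decomp I S T -> D I S T (m I S T x y) = (x, y).
Proof.
move=> dec; have := ph_compat hopf x y dec dec => /=.
move: (dec) => /andP[/eqP hST _].
rewrite hST fsetIid fsetIC hST fsetIid.
move=> ->.
have [c1 c2] := ph_counit hopf x; have [c3 c4] := ph_counit hopf y.
rewrite c1 c4.
have [u1 _] := ph_unit hopf x (D T fset0 T y).1.
have [_ u2] := ph_unit hopf y (D S S fset0 x).2.
by rewrite u1 u2.
Qed.

Lemma DmTS I S T (x : H S) (y : H T) : decomp I S T -> D I T S (m I S T x y) = (y, x).
Proof.
move=> dec; have := ph_compat hopf x y dec (decompC _ _ _ dec) => /=.
move: (dec) => /andP[/eqP hST _].
rewrite hST fsetIid fsetIC hST fsetIid.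
move=> ->.
have [c1 c2] := ph_counit hopf x; have [c3 c4] := ph_counit hopf y.
rewrite c2 c3.
have [_ u1] := ph_unit hopf y (D S fset0 S x).1.
have [u2 _] := ph_unit hopf x (D T T fset0 y).2.
by rewrite u1 u2.
Qed.

Hypothesis sa : self_adjoint m D.

Lemma m_comm I S T (x : H S) (y : H T) : decomp I S T -> m I S T x y = m I T S y x.
Proof.
move=> dec; have decC := decompC _ _ _ dec.
case: sa => adj.
- apply/le_anti/andP; split.
    have := adj I T S decC (m I S T x y) (y, x).
    by rewrite DmTS // /Defs.le_pair /= !lexx => <-.
  have := adj I S T dec (m I T S y x) (x, y).
  by rewrite DmTS // /Defs.le_pair /= !lexx => <-.
- apply/le_anti/andP; split.
    have := adj I S T dec (x, y) (m I T S y x).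
    by rewrite /= DmTS // /Defs.le_pair /= !lexx.
  have := adj I T S decC (y, x) (m I S T x y).
  by rewrite /= DmTS // /Defs.le_pair /= !lexx.
Qed.

Lemma D_cocomm I S T (z : H I) : decomp I S T ->
  D I S T z = ((D I T S z).2, (D I T S z).1).
Proof.
move=> dec; have decC := decompC _ _ _ dec.
case: sa => adj.
- have h1 := adj I S T dec z (D I S T z).
  have h2 := adj I T S decC z (D I T S z).
  rewrite /Defs.le_pair !lexx /= in h1 h2.
  have h3 := adj I T S decC z ((D I S T z).2, (D I S T z).1).
  have h4 := adj I S T dec z ((D I T S z).2, (D I T S z).1).
  rewrite /= -m_comm // -h1 in h3.
  rewrite /= -m_comm // -h2 in h4.
  move: h3 h4; rewrite /Defs.le_pair /=.
  case: (D I S T z) => a1 a2; case: (D I T S z) => c1 c2 /=.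
  move=> /andP[l1 l2] /andP[l3 l4].
  by rewrite (@le_anti _ _ a1 c2) ?l3 ?l2 // (@le_anti _ _ a2 c1) ?l1 ?l4.
- have h1 := adj I S T dec (D I S T z) z.
  have h2 := adj I T S decC (D I T S z) z.
  rewrite /Defs.le_pair !lexx /= in h1 h2.
  have h3 := adj I T S decC ((D I S T z).2, (D I S T z).1) z.
  have h4 := adj I S T dec ((D I T S z).2, (D I T S z).1) z.
  rewrite /= -m_comm // h1 in h3.
  rewrite /= -m_comm // h2 in h4.
  move: h3 h4; rewrite /Defs.le_pair /=.
  case: (D I S T z) => a1 a2; case: (D I T S z) => c1 c2 /=.
  move=> /esym/andP[l1 l2] /esym/andP[l3 l4].
  by rewrite (@le_anti _ _ a1 c2) ?l3 ?l2 // (@le_anti _ _ a2 c1) ?l1 ?l4.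
Qed.

End Aux.
Arguments m_comm {d H rel m D} hopf sa {I S T} x y _.
Arguments D_cocomm {d H rel m D} hopf sa {I S T} z _.

Theorem mainTheorem10 (k : fieldType) (k_char0 : [pchar k]%R =i pred0)
  (d : Order.disp_t) (H : {fset nat} -> porderType d)
  (rel : forall I J : {fset nat}, (nat -> nat) -> H I -> H J)
  (m : forall I S T : {fset nat}, H S -> H T -> H I)
  (D : forall I S T : {fset nat}, H I -> H S * H T) :
  poset_Hopf_monoid rel m D -> self_adjoint m D ->
  lin_commutative k m /\ lin_cocommutative k D.
Proof.
move=> hopf sa; split.
- move=> I S T f g dec; rewrite /lin_mul exchange_big /=.
  apply: eq_bigr => b _; apply: eq_bigr => a _.
  by rewrite (m_comm hopf sa _ _ dec) mulrC.
- move=> I S T f dec; apply/malgP => q.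
  rewrite /lin_swap /lin_comul.
  rewrite raddf_sum /=.
  set g := (\sum_(a <- msupp f) << f@_a *g D I T S a >>)%R.
  rewrite raddf_sum /=.
  transitivity (g@_(q.2, q.1))%R.
    rewrite /g raddf_sum /=; apply: eq_bigr => a _.
    rewrite !mcoeffU (D_cocomm hopf sa _ dec).
    by case: (D I T S a) q => [c1 c2] [q1 q2]; rewrite !xpair_eqE andbC.
  rewrite {1}(monalgE g) raddf_sum /=; apply: eq_bigr => p _.
  rewrite !mcoeffU.
  by case: p q => [c1 c2] [q1 q2]; rewrite !xpair_eqE andbC.
Qed.
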